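(* Consider the $q$-composite random key predistribution scheme on $n$ sensors with key pool size $P_n$ and key ring size $K_n$, where $q$ is a fixed positive integer and $q\le K_n\le P_n$. Suppose an adversary captures a uniformly random set of $m=m(n)$ sensors and learns all keys in their key rings, and let $p_{\textnormal{compromised}}$ denote the probability that the secure link between two non-captured sensors is compromised, conditioned on these two sensors sharing at least $q$ keys. If $\frac{P_n}{K_n}=\Omega(n)$, then $p_{\textnormal{compromised}}=o(1)$ whenever $m=o(n)$.
   Context: In the $q$-composite scheme, each sensor independently receives $K_n$ distinct keys chosen uniformly at random among all $K_n$-subsets of a pool of $P_n$ keys; two sensors have a secure link iff their key rings share at least $q$ keys. The secure link between two non-captured sensors is compromised iff every key shared by their key rings belongs to the key ring of at least one captured sensor. Asymptotics are as $n\to\infty$; $x_n=\Omega(y_n)$ means $x_n\ge c\,y_n$ for some constant $c>0$ and all large $n$; $x_n=o(y_n)$ means $x_n/y_n\to 0$. *)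

(* Defs.v *)
From HB Require Import structures.
From mathcomp Require Import all_boot all_order all_algebra.
From mathcomp Require Import all_classical all_reals all_analysis.
Set Implicit Arguments. Unset Strict Implicit. Unset Printing Implicit Defensive.
Import Order.TTheory GRing.Theory Num.Theory.
Local Open Scope ring_scope.

(* Sample space of the relevant randomness for the q-composite scheme with key
   pool 'I_P: the key rings S1, S2 of the two non-captured sensors, and the key
   rings C i (i < m) of the m captured sensors.  All key rings are independent
   and uniform among the K-subsets of the pool, so the uniform distribution on
   the valid outcomes below is exactly the joint law. *)
Definition outcome (P m : nat) : finType :=
  ({set 'I_P} * {set 'I_P} * {ffun 'I_m -> {set 'I_P}})%type.

Definition valid_outcome (P K m : nat) (w : outcome P m) : bool :=
  [&& #|w.1.1| == K, #|w.1.2| == K & [forall i, #|w.2 i| == K]].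

Definition linked (P m q : nat) (w : outcome P m) : bool :=
  (q <= #|w.1.1 :&: w.1.2|)%N.

Definition compromised (P m : nat) (w : outcome P m) : bool :=
  (w.1.1 :&: w.1.2) \subset \bigcup_(i < m) w.2 i.

Definition p_compromised (R : realType) (P K q m : nat) : R :=
  (#|[set w : outcome P m | [&& valid_outcome K w, linked q w & compromised w]]|%:R)
  / (#|[set w : outcome P m | valid_outcome K w && linked q w]|%:R).

(* Main.v *)
Require Import Defs.
From HB Require Import structures.
From mathcomp Require Import all_boot all_order all_algebra.
From mathcomp Require Import all_classical all_reals all_analysis.
From mathcomp Require Import fingroup perm.
Import Order.TTheory GRing.Theory Num.Theory.

Section Helpers.
Local Open Scope nat_scope.
Local Set Implicit Arguments. Local Unset Strict Implicit.
Lemma sym_le (P K : nat) (x y : 'I_P) :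
  (#|[set S : {set 'I_P} | (#|S| == K) && (x \in S)]| <=
   #|[set S : {set 'I_P} | (#|S| == K) && (y \in S)]|)%N.
Proof.
set s := tperm x y.
rewrite -(card_imset _ (imset_inj (@perm_inj _ s))).
apply: subset_leq_card; apply/fintype.subsetP => T /imsetP [S]; rewrite !inE => /andP [/eqP HS Hx] ->.
rewrite card_imset ?HS ?eqxx /=; last exact: perm_inj.
by apply/imsetP; exists x => //; rewrite tpermL.
Qed.

Lemma sym_card (P K : nat) (y : 'I_P) :
  (#|[set S : {set 'I_P} | (#|S| == K) && (y \in S)]| * P =
   K * #|[set S : {set 'I_P} | #|S| == K]|)%N.
Proof.
have E : forall x, #|[set S : {set 'I_P} | (#|S| == K) && (x \in S)]| =
   #|[set S : {set 'I_P} | (#|S| == K) && (y \in S)]|.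
  by move=> x; apply/eqP; rewrite eqn_leq !sym_le.
have H1 : (\sum_(x : 'I_P) #|[set S : {set 'I_P} | (#|S| == K) && (x \in S)]|
   = #|[set S : {set 'I_P} | (#|S| == K) && (y \in S)]| * P)%N.
  by rewrite (eq_bigr _ (fun x _ => E x)) big_const card_ord iter_addn_0 mulnC.
rewrite -H1.
under eq_bigr do rewrite -sum1_card big_mkcond.
rewrite exchange_big /= -sum1_card big_distrr /= [RHS]big_mkcond /=.
apply: eq_bigr => S _; rewrite muln1 inE.
case: (boolP (#|S| == K)) => HS.
  under eq_bigr do rewrite inE HS /=.
  by rewrite -big_mkcond /= sum1_card (eqP HS).
by rewrite big1 // => x _; rewrite inE (negbTE HS).
Qed.

Lemma card_fam_prod (m : nat) (T : finType) (F : 'I_m -> pred T) :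
  #|[set f : {ffun 'I_m -> T} | [forall j, F j (f j)]]| = (\prod_j #|F j|)%N.
Proof.
have := @card_family _ (fun _ => T) F.
rewrite foldrE big_image /= => <-.
apply: eq_card => f; rewrite inE; apply/forallP/familyP => H j; exact: H.
Qed.

Lemma fam_bound (P K m : nat) (i : 'I_m) (y : 'I_P) :
  (#|[set f : {ffun 'I_m -> {set 'I_P}} | [forall j, #|f j| == K] && (y \in f i)]| * P
   = K * #|[set f : {ffun 'I_m -> {set 'I_P}} | [forall j, #|f j| == K]]|)%N.
Proof.
pose F := fun (j : 'I_m) (S : {set 'I_P}) =>
  if j == i then (#|S| == K) && (y \in S) else #|S| == K.
have -> : [set f : {ffun 'I_m -> {set 'I_P}} | [forall j, #|f j| == K] && (y \in f i)]
   = [set f : {ffun 'I_m -> {set 'I_P}} | [forall j, F j (f j)]].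
  apply/setP => f; rewrite !inE; apply/andP/forallP.
    move=> [/forallP H Hy] j; rewrite /F; case: eqP => [->|_]; by rewrite ?H ?Hy.
  move=> H; split; last by have := H i; rewrite /F eqxx => /andP [].
  by apply/forallP => j; have := H j; rewrite /F; case: eqP => // _ /andP [].
have E0 : #|[set f : {ffun 'I_m -> {set 'I_P}} | [forall j, #|f j| == K]]|
   = (\prod_(j < m) #|(fun S : {set 'I_P} => #|S| == K)|)%N.
  rewrite -(card_fam_prod (fun (_:'I_m) (S:{set 'I_P}) => #|S| == K)).
  by apply: eq_card => f; rewrite !inE.
rewrite E0.
rewrite card_fam_prod (bigD1 i) //= [X in (_ = K * X)%N](bigD1 i) //=.
rewrite (eq_bigr (fun _ => #|(fun S : {set 'I_P} => #|S| == K)|)); last first.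
  by move=> j /negbTE Hj; rewrite /F Hj.
rewrite /F eqxx mulnAC mulnA.
have E1 : #|(fun S : {set 'I_P} => (#|S| == K) && (y \in S))| = #|[set S : {set 'I_P} | (#|S| == K) && (y \in S)]|.
  by apply: eq_card => S; rewrite inE.
have E2 : #|(fun S : {set 'I_P} => (#|S| == K))| = #|[set S : {set 'I_P} | (#|S| == K)]|.
  by apply: eq_card => S; rewrite inE.
by rewrite E1 sym_card E2.
Qed.

Definition gpick (P : nat) (u : {set 'I_P} * {set 'I_P}) := [pick x in u.1 :&: u.2].

Definition Bset (P K q m : nat) (i : 'I_m) :=
  [set w : outcome P m | valid_outcome K w && linked q w &&
     (if gpick w.1 is Some x then x \in w.2 i else false)].

Lemma B_bound (P K q m : nat) (i : 'I_m) : (0 < q)%N ->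
  (#|@Bset P K q m i| * P <= K * #|[set w : outcome P m | valid_outcome K w && linked q w]|)%N.
Proof.
move=> q0.
rewrite -!sum1_card big_mkcond /= [X in (_ <= K * X)%N]big_mkcond /=.
have E : forall F : outcome P m -> nat, (\sum_(w : outcome P m) F w = \sum_u \sum_f F (u, f))%N.
  by move=> F; rewrite pair_bigA; apply: eq_bigr => -[u f] _.
rewrite !E big_distrl big_distrr /=; apply: leq_sum => u _.
rewrite /Bset /valid_outcome /linked.
case Hu : [&& #|u.1| == K, #|u.2| == K & (q <= #|u.1 :&: u.2|)%N]; last first.
  rewrite big1 ?muln0 ?leqnn // => f _; rewrite inE /=; move: Hu.
  by case: (#|u.1| == K); case: (#|u.2| == K) => //= ->; rewrite andbF.
move/and3P: Hu => [H1 H2 H3].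
rewrite /gpick; case Hg: [pick x in u.1 :&: u.2] => [y|]; last first.
  move: Hg; case: pickP => // H0 _.
  have : (0 < #|u.1 :&: u.2|)%N by apply: leq_trans H3.
  by rewrite card_gt0 => /set0Pn [x]; rewrite H0.
have C1 : forall p : pred {ffun 'I_m -> {set 'I_P}},
    (\sum_f (if p f then 1 else 0) = #|[set f | p f]|)%N.
  by move=> p; rewrite -sum1_card [RHS]big_mkcond; apply: eq_bigr => f _; rewrite inE.
rewrite (eq_bigr (fun f : {ffun 'I_m -> {set 'I_P}} => if [forall j, #|f j| == K] && (y \in f i) then 1 else 0)%N); last first.
  by move=> f _; rewrite inE /= H1 H2 H3 Hg /= andbT.
rewrite [X in (_ <= K * X)%N](eq_bigr (fun f : {ffun 'I_m -> {set 'I_P}} => if [forall j, #|f j| == K] then 1 else 0)%N); last first.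
  by move=> f _; rewrite inE /= H1 H2 H3 /= andbT.
by rewrite !C1 fam_bound.
Qed.

Lemma count_bound (P K q m : nat) : (0 < q)%N ->
  (#|[set w : outcome P m | [&& valid_outcome K w, linked q w & compromised w]]| * P
   <= m * K * #|[set w : outcome P m | valid_outcome K w && linked q w]|)%N.
Proof.
move=> q0.
apply: (@leq_trans (\sum_(i < m) #|@Bset P K q m i| * P)).
  rewrite -big_distrl leq_mul2r; apply/orP; right.
  rewrite -sum1_card [X in (X <= _)%N]big_mkcond /=.
  rewrite (eq_bigr (fun i => \sum_(w : outcome P m) (if w \in @Bset P K q m i then 1 else 0))%N); last first.
    by move=> i _; rewrite -sum1_card [LHS]big_mkcond.
  rewrite exchange_big /=; apply: leq_sum => w _.
  case: ifP => //; rewrite inE => /and3P [Hv Hl Hc].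
  have Hx : exists x, (gpick w.1 == Some x) && (x \in w.1.1 :&: w.1.2).
    rewrite /gpick; case: pickP => [x Hx|H0]; first by exists x; rewrite eqxx Hx.
    have : (0 < #|w.1.1 :&: w.1.2|)%N by apply: leq_trans Hl.
    by rewrite card_gt0 => /set0Pn [x]; rewrite H0.
  case: Hx => x /andP [/eqP Hg Hx].
  have /bigcupP [i0 _ Hi0] := fintype.subsetP Hc x Hx.
  by rewrite (bigD1 i0) //= inE Hv Hl Hg Hi0.
apply: (@leq_trans (\sum_(i < m) K * #|[set w : outcome P m | valid_outcome K w && linked q w]|)).
  by apply: leq_sum => i _; apply: B_bound.
by rewrite big_const_ord iter_addn_0 mulnC mulnA.
Qed.

End Helpers.

Local Open Scope ring_scope.
Lemma p_bound (R : realType) (P K q m : nat) : (0 < q)%N -> (0 < P)%N ->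
  p_compromised R P K q m <= (m * K)%:R / P%:R.
Proof.
move=> q0 P0; rewrite /p_compromised.
set a := #|_|; set b := #|_|.
have := @count_bound P K q m q0; rewrite -/a -/b => H.
have [b0|bpos] := eqVneq b 0%N.
  by rewrite b0 invr0 mulr0 divr_ge0.
rewrite ler_pdivrMr ?ltr0n ?lt0n // mulrAC ler_pdivlMr ?ltr0n // -!natrM ler_nat; exact: H.
Qed.

Lemma p_ge0 (R : realType) (P K q m : nat) : 0 <= p_compromised R P K q m.
Proof. by rewrite /p_compromised divr_ge0. Qed.


Local Open Scope classical_set_scope.
Local Open Scope ring_scope.

Theorem corollary1 (R : realType) (q : nat) (Pn Kn m : nat -> nat) :
  (0 < q)%N ->
  (forall n, q <= Kn n <= Pn n)%N ->
  (exists2 c : R, 0 < c &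
     \forall n \near \oo, c * n%:R <= (Pn n)%:R / (Kn n)%:R) ->
  (fun n : nat => ((m n)%:R / n%:R : R)) @ \oo --> (0 : R^o) ->
  (fun n : nat => p_compromised R (Pn n) (Kn n) q (m n)) @ \oo --> (0 : R^o).
Proof.
move=> q0 hKP [c c0 hc] hm.
have hh : (fun n : nat => ((m n)%:R / n%:R : R) * c^-1) @ \oo --> (0 : R^o).
  by rewrite -(mul0r c^-1); apply: cvgMl.
apply: (squeeze_cvgr (f := fun=> (0:R)) (h := fun n : nat => ((m n)%:R / n%:R : R) * c^-1)); [|exact: (@cvg_cst R^o 0)|exact: hh].
near=> n.
rewrite p_ge0 /=.
have n1 : (0 < n)%N by near: n; exists 1%N.
have hcn : c * n%:R <= (Pn n)%:R / (Kn n)%:R by near: n; exact: hc.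
have hq := hKP n; move/andP: hq => [qK KP].
have K0 : (0 < Kn n)%N by apply: leq_trans q0 qK.
have P0 : (0 < Pn n)%N by apply: leq_trans K0 KP.
have cn0 : 0 < c * n%:R by rewrite mulr_gt0 ?ltr0n.
have h1 : (Kn n)%:R / (Pn n)%:R <= (c * n%:R)^-1 :> R.
  rewrite ler_pdivrMr ?ltr0n // mulrC ler_pdivlMr //.
  by rewrite mulrC -ler_pdivlMr ?ltr0n.

have hp := p_bound R (Pn n) (Kn n) q (m n) q0 P0.
apply: (le_trans hp).
rewrite natrM -mulrA.
have -> : (m n)%:R / n%:R * c^-1 = (m n)%:R * (c * n%:R)^-1 :> R.
  by rewrite invfM [c^-1 * _]mulrC mulrA.
by apply: ler_wpM2l.
Unshelve. all: by end_near.
Qed.
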